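(* Let $G$ be a graph. Then \[\chi(G) \leq \frac{1}{2} (\omega(G) + \Delta(G) + 1) + \frac{\delta(\overline{G}) - \eta(G)}{4}.\]
   Context: All graphs are finite and simple with non-empty vertex set. $\chi$ is the chromatic number, $\omega$ the clique number, $\Delta$ the maximum degree; $\overline{G}$ is the complement of $G$ and $\delta(\overline{G})$ its minimum degree. The chromatic excess of $G$ is $\eta(G) = \max_{H} \left(|H| - 3\chi(H)\right)$, where the maximum ranges over all induced subgraphs $H$ of $G$ with non-empty vertex set and $|H|$ is the number of vertices of $H$. *)

(* Defs.v *)
(* A simple graph = symmetric irreflexive relation e on a finType T. *)
From mathcomp Require Import all_boot all_order all_algebra.
Set Implicit Arguments. Unset Strict Implicit. Unset Printing Implicit Defensive.
Import Order.TTheory GRing.Theory Num.Theory.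

Section Graph.
Variables (T : finType) (e : rel T).

Definition colourable (S : {set T}) (k : nat) : bool :=
  [exists f : {ffun T -> 'I_k},
     [forall x in S, forall y in S, e x y ==> (f x != f y)]].

(* chromatic number of the subgraph induced on S: least k <= #|T| such that
   S is k-colourable (for a simple graph S is always #|T|-colourable, so this
   is the true minimum). *)
Definition chi_on (S : {set T}) : nat :=
  \big[minn/#|T|]_(k < #|T|.+1 | colourable S k) (k : nat).

Definition chi : nat := chi_on [set: T].

Definition is_clique (S : {set T}) : bool :=
  [forall x in S, forall y in S, (x != y) ==> e x y].

Definition omega : nat := \max_(S : {set T} | is_clique S) #|S|.

Definition Delta : nat := \max_(x : T) #|[set y | e x y]|.

Definition delta_compl : nat :=
  \big[minn/#|T|]_(x : T) #|[set y | (y != x) && ~~ e x y]|.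

(* chromatic excess: max over non-empty induced subgraphs H of |H| - 3 chi(H).
   The seed -3|T| is below every value |S| - 3 chi(S) >= -2|S| when T is
   non-empty, so it does not affect the maximum. *)
Definition eta : int :=
  \big[Num.max/(- (3 * #|T|)%:Z)%R]_(S : {set T} | S != set0)
     ((#|S|%:Z) - ((3 * chi_on S)%:Z))%R.

End Graph.

(* Main.v *)
Require Import Defs.
From mathcomp Require Import all_boot all_order all_algebra.
From mathcomp Require Import zify lra.
Set Implicit Arguments. Unset Strict Implicit. Unset Printing Implicit Defensive.
Section Main.
Variables (T : finType) (e : rel T).
Hypothesis e_sym : symmetric e.
Hypothesis e_irr : irreflexive e.

Definition prop (X : Type) (f : T -> X) (S : {set T}) :=
  forall x y, x \in S -> y \in S -> e x y -> f x <> f y.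

Definition chi' (S : {set T}) : nat := if S == set0 then 0 else chi_on e S.

Lemma chi_on_col S : exists f : T -> nat, prop f S /\ forall x, x \in S -> f x < chi_on e S.
Proof.
rewrite /chi_on.
apply: (big_ind (fun m => exists f : T -> nat, prop f S /\ forall x, x \in S -> f x < m)).
- exists (fun x => val (enum_rank x)); split; last by move=> x _; exact: ltn_ord.
  move=> x y _ _ exy /val_inj /enum_rank_inj exy'; by rewrite exy' e_irr in exy.
- move=> m1 m2 [f1 [p1 b1]] [f2 [p2 b2]].
  case: (leqP m1 m2) => h.
  + exists f1; split => // x xS; rewrite (minn_idPl h); exact: b1.
  + exists f2; split => // x xS; rewrite (minn_idPr (ltnW h)); exact: b2.
- move=> k /existsP [f /forallP Hf]; exists (fun x => val (f x)); split; last by move=> x _; exact: ltn_ord.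
  move=> x y xS yS exy /val_inj fxy.
  move: (Hf x); rewrite xS /= => /forallP /(_ y); rewrite yS exy /= fxy eqxx //.
Qed.

Lemma chiP S : exists f : T -> nat, prop f S /\ forall x, x \in S -> f x < chi' S.
Proof.
rewrite /chi'; case: eqP => [->|_]; last exact: chi_on_col.
by exists (fun _ => 0); split => // x; rewrite inE.
Qed.

Lemma bigmin_le_seq (I : eqType) (r : seq I) (P : pred I) (F : I -> nat) x i0 :
  i0 \in r -> P i0 -> \big[minn/x]_(i <- r | P i) F i <= F i0.
Proof.
move=> + Pi0; elim: r => // h t ih; rewrite inE big_cons.
move=> /predU1P[<-|i0t]; first by rewrite Pi0 geq_minl.
by case: ifPn => Ph; [rewrite geq_min ih ?orbT | rewrite ih].
Qed.

Lemma chi_le S k (f : T -> nat) : prop f S -> (forall x, x \in S -> f x < k) -> chi' S <= k.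
Proof.
move=> pf bf; rewrite /chi'; case: eqP => // /eqP /set0Pn [x0 x0S].
have k0 : 0 < k by apply: leq_ltn_trans (bf _ x0S).
case: (leqP k #|T|) => hk; last first.
  rewrite /chi_on.
  elim/big_ind: _ => //; [by apply: ltnW| move=> a b ha hb; rewrite geq_min ha // | move=> i _; apply: ltnW; apply: leq_ltn_trans hk; rewrite -ltnS; exact: ltn_ord].
have Hc : colourable e S k.
  case: k k0 bf hk => // k _ bf hk.
  apply/existsP; exists [ffun x => inord (f x)]; apply/forallP => x; apply/implyP => xS.
  apply/forallP => y; apply/implyP => yS; apply/implyP => exy.
  rewrite !ffunE; apply/negP => /eqP /(congr1 val) /=; rewrite !inordK; [exact: pf xS yS exy | exact: bf | exact: bf].
rewrite /chi_on.
have := @bigmin_le_seq _ (index_enum 'I_#|T|.+1) (fun k0 : 'I_#|T|.+1 => colourable e S k0) (fun k0 => val k0) #|T| (Ordinal (hk : k < #|T|.+1)) (mem_index_enum _) Hc; exact.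
Qed.

Lemma chi_sub (A B : {set T}) : A \subset B -> chi' A <= chi' B.
Proof.
move=> AB; have [f [pf bf]] := chiP B.
apply: (chi_le (f := f)).
- move=> x y xA yA; apply: pf; exact: (subsetP AB).
- move=> x xA; apply: bf; exact: (subsetP AB).
Qed.

Lemma chi_img (X : finType) (f : T -> X) (S : {set T}) : prop f S -> chi' S <= #|f @: S|.
Proof.
move=> pf.
apply: (chi_le (f := fun x => index (f x) (enum (f @: S)))).
- move=> x y xS yS exy h; apply: (pf x y xS yS exy).
  have hx : f x \in enum (f @: S) by rewrite mem_enum; apply/imsetP; exists x.
  by rewrite -(nth_index (f x) hx) h nth_index // mem_enum; apply/imsetP; exists y.
- move=> x xS; rewrite cardE index_mem mem_enum; apply/imsetP; exists x => //.
Qed.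


Definition om (S : {set T}) := \max_(C : {set T} | (C \subset S) && is_clique e C) #|C|.
Definition De (S : {set T}) := \max_(x in S) #|[set y in S | e x y]|.

Lemma cliqueP (C : {set T}) :
  (forall x y, x \in C -> y \in C -> x != y -> e x y) -> is_clique e C.
Proof.
move=> h; apply/forallP => x; apply/implyP => xC; apply/forallP => y; apply/implyP => yC.
apply/implyP; exact: h.
Qed.

Lemma om_ge (C S : {set T}) : C \subset S -> (forall x y, x \in C -> y \in C -> x != y -> e x y) -> #|C| <= om S.
Proof. move=> CS h; rewrite /om; apply: (@leq_bigmax_cond _ (fun C : {set T} => (C \subset S) && is_clique e C) (fun C : {set T} => #|C|) C); by rewrite CS cliqueP. Qed.

Lemma om_sub (S' S : {set T}) : S' \subset S -> om S' <= om S.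
Proof.
move=> h; apply/bigmax_leqP => C /andP [CS cC].
by apply: (@leq_bigmax_cond _ (fun C : {set T} => (C \subset S) && is_clique e C) (fun C : {set T} => #|C|) C); rewrite (subset_trans CS h) cC.
Qed.

Lemma De_ge x (S : {set T}) : x \in S -> #|[set y in S | e x y]| <= De S.
Proof. move=> xS; rewrite /De; exact: (@leq_bigmax_cond _ (fun x => x \in S) (fun x => #|[set y in S | e x y]|) x). Qed.

Definition sing (f : T -> T) (S : {set T}) x := [forall y in S, (f y == f x) ==> (y == x)].

Lemma singP (f : T -> T) (S : {set T}) x : reflect (forall y, y \in S -> f y = f x -> y = x) (sing f S x).
Proof.
apply: (iffP forallP) => h.
- move=> y yS fy; move: (h y); rewrite yS fy eqxx /=; by move/eqP.
- move=> y; apply/implyP => yS; apply/implyP => /eqP fy; apply/eqP; exact: h.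
Qed.

Lemma count_classes (f : T -> T) (S : {set T}) :
  2 * #|f @: S| <= #|S| + #|[set x in S | sing f S x]|.
Proof.
set U := [set x in S | sing f S x].
have US : U \subset S by apply/subsetP => x; rewrite inE => /andP[].
have eS : S = U :|: (S :\: U) by apply/setP => x; rewrite in_setU in_setD; case xU: (x \in U) => //=; rewrite (subsetP US x xU).
have cS : #|S| = #|U| + #|S :\: U| by rewrite -(cardsID U S) (setIidPr US) addnC.
have h1 : #|f @: S| <= #|f @: U| + #|f @: (S :\: U)| by rewrite {1}eS imsetU; exact: leq_card_setU.
have h2 : #|f @: U| <= #|U| by exact: leq_imset_card.
suff h3 : 2 * #|f @: (S :\: U)| <= #|S :\: U| by lia.
have -> : #|S :\: U| = \sum_(x in S :\: U) 1 by rewrite sum1_card.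
have -> : 2 * #|f @: (S :\: U)| = \sum_(c in f @: (S :\: U)) 2 by rewrite sum_nat_const mulnC.
rewrite [X in _ <= X](partition_big_imset f) /=.
apply: leq_sum => c /imsetP [x0 x0D ->].
rewrite sum1dep_card.
move: x0D; rewrite !inE => /andP [x0U x0S].
have : ~~ sing f S x0 by move: x0U; rewrite x0S.
move/forallPn => [y]; rewrite negb_imply => /andP [yS]; rewrite negb_imply => /andP [/eqP fy yx].
have yU : y \notin U.
  rewrite inE yS /=; apply/negP => /singP sy.
  by move: yx; rewrite (sy x0 x0S (esym fy)) eqxx.
have sub : [set x0; y] \subset [set x | (x \in S :\: U) && (f x == f x0)].
  apply/subsetP => z; rewrite !inE => /orP [] /eqP ->.
  - by rewrite x0U x0S eqxx.
  - by move: yU; rewrite inE => ->; rewrite yS fy eqxx.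
by apply: leq_trans (subset_leq_card sub); rewrite cards2 eq_sym yx.
Qed.

Definition minc (S : {set T}) (f : T -> T) :=
  prop f S /\ forall g : T -> T, prop g S -> #|f @: S| <= #|g @: S|.

Lemma exists_minc S : exists f, minc S f.
Proof.
pose P (g : {ffun T -> T}) := [forall x in S, forall y in S, e x y ==> (g x != g y)].
have P0 : P [ffun x => x].
  apply/forallP => x; apply/implyP => _; apply/forallP => y; apply/implyP => _; apply/implyP => exy.
  rewrite !ffunE; apply/eqP => exy'; by rewrite exy' e_irr in exy.
case: (arg_minnP (fun g : {ffun T -> T} => #|g @: S|) P0) => f Pf fmin.
exists f; split.
  move=> x y xS yS exy; move/forallP: Pf => /(_ x); rewrite xS /= => /forallP /(_ y).
  by rewrite yS exy /= => /eqP.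
move=> g pg.
have Pg : P [ffun x => g x].
  apply/forallP => x; apply/implyP => xS; apply/forallP => y; apply/implyP => yS; apply/implyP => exy.
  rewrite !ffunE; apply/eqP; exact: pg.
have := fmin _ Pg.
have -> : [ffun x => g x] @: S = g @: S by apply: eq_imset => x; rewrite ffunE.
done.
Qed.

Lemma minc_sub S f g : minc S f -> prop g S -> g @: S \subset f @: S -> minc S g.
Proof.
move=> [pf mf] pg sub; split => // h ph.
apply: leq_trans (subset_leq_card sub) _; exact: mf.
Qed.

Lemma merge S f u1 u2 : minc S f -> u1 \in S -> u2 \in S -> u1 != u2 ->
  sing f S u1 -> sing f S u2 -> e u1 u2.
Proof.
move=> [pf mf] u1S u2S u12 /singP s1 /singP s2.
apply/negPn/negP => ne.
pose g := fun x => if f x == f u1 then f u2 else f x.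
have f12 : f u2 != f u1 by apply/eqP => h; move: u12; rewrite (s1 _ u2S h) eqxx.
have pg : prop g S.
  move=> x y xS yS exy; rewrite /g.
  case: (eqVneq (f x) (f u1)) => hx; case: (eqVneq (f y) (f u1)) => hy.
  - by move: exy; rewrite (s1 _ xS hx) (s1 _ yS hy) e_irr.
  - move=> h; have := s2 _ yS (esym h); move=> yu2; move: exy; rewrite (s1 _ xS hx) yu2 => exy.
    by move: ne; rewrite exy.
  - move=> h; have := s2 _ xS h; move=> xu2; move: exy; rewrite (s1 _ yS hy) xu2 e_sym => exy.
    by move: ne; rewrite exy.
  - exact: pf.
have sub : g @: S \subset (f @: S) :\ f u1.
  apply/subsetP => c /imsetP [x xS ->]; rewrite !inE /g.
  case: (eqVneq (f x) (f u1)) => hx.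
  - by rewrite f12 /=; apply/imsetP; exists u2.
  - by rewrite hx /=; apply/imsetP; exists x.
have := mf g pg.
have : #|g @: S| < #|f @: S|.
  apply: leq_ltn_trans (subset_leq_card sub) _.
  rewrite (cardsD1 (f u1) (f @: S)).
  have -> : f u1 \in f @: S by apply/imsetP; exists u1.
  by [].
lia.
Qed.

Definition notriple (S : {set T}) := forall x y z, x \in S -> y \in S -> z \in S ->
  ~~ e x y -> ~~ e y z -> ~~ e x z -> [\/ x = y, y = z | x = z].

Section Alpha2.
Variables (S : {set T}) (f : T -> T).
Hypothesis nt : notriple S.
Hypothesis fmin : minc S f.

Lemma fprop : prop f S. Proof. by case: fmin. Qed.

Lemma same_nonadj x y : x \in S -> y \in S -> f x = f y -> ~~ e x y.
Proof. by move=> xS yS fxy; apply/negP => exy; exact: (fprop xS yS exy fxy). Qed.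

Lemma cls2 x y z : x \in S -> y \in S -> z \in S -> f x = f z -> f y = f z -> x != z -> y != z -> x = y.
Proof.
move=> xS yS zS fxz fyz xz yz.
have := nt xS yS zS (same_nonadj xS yS (etrans fxz (esym fyz))) (same_nonadj yS zS fyz) (same_nonadj xS zS fxz).
by case=> // h; [move: yz | move: xz]; rewrite h eqxx.
Qed.

Definition U := [set x in S | sing f S x].
Lemma inU x : (x \in U) = (x \in S) && sing f S x. Proof. by rewrite inE. Qed.

Lemma U_clique x y : x \in U -> y \in U -> x != y -> e x y.
Proof. rewrite !inU => /andP [xS sx] /andP [yS sy] xy; exact: (merge fmin xS yS xy sx sy). Qed.

Definition NN v := [set y in S | (y != v) && ~~ e v y].
Lemma inNN v y : (y \in NN v) = [&& y \in S, y != v & ~~ e v y]. Proof. by rewrite inE. Qed.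

Lemma NN_clique v : v \in S -> forall x y, x \in NN v -> y \in NN v -> x != y -> e x y.
Proof.
move=> vS x y; rewrite !inNN => /and3P [xS xv vx] /and3P [yS yv vy] xy.
apply/negPn/negP => nxy.
have := nt vS xS yS vx nxy vy.
by case=> h; [move: xv | move: xy | move: yv]; rewrite h eqxx.
Qed.

Definition partner w := odflt w [pick y in S | (y != w) && (f y == f w)].

Lemma partnerP w : w \in S -> ~~ sing f S w ->
  [/\ partner w \in S, partner w != w & f (partner w) = f w].
Proof.
move=> wS /forallPn [y]; rewrite negb_imply => /andP [yS]; rewrite negb_imply => /andP [/eqP fy yw].
rewrite /partner; case: pickP => [z /and3P [zS zw /eqP fz] | h] /=; first by [].
by move: (h y); rewrite yS yw fy eqxx.
Qed.

Section WithU.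
Variable u : T.
Hypothesis uU : u \in U.

Lemma uS : u \in S. Proof. by move: uU; rewrite inU => /andP []. Qed.
Lemma su y : y \in S -> f y = f u -> y = u.
Proof. by move: uU; rewrite inU => /andP [_ /singP]; apply. Qed.

Lemma NN_notU w : w \in NN u -> w \notin U.
Proof.
rewrite inNN => /and3P [wS wu uw]; apply/negP => wU.
by move: uw; rewrite (U_clique uU wU) // eq_sym.
Qed.

Lemma NN_S w : w \in NN u -> w \in S. Proof. by rewrite inNN => /and3P []. Qed.
Lemma NN_neq w : w \in NN u -> w != u. Proof. by rewrite inNN => /and3P []. Qed.
Lemma NN_nadj w : w \in NN u -> ~~ e u w. Proof. by rewrite inNN => /and3P []. Qed.

Lemma pP w : w \in NN u -> [/\ partner w \in S, partner w != w & f (partner w) = f w].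
Proof.
move=> wN; apply: partnerP; first exact: NN_S.
by move: (NN_notU wN); rewrite inU (NN_S wN).
Qed.

Lemma p_adj w : w \in NN u -> e u (partner w).
Proof.
move=> wN; have [pS pw fp] := pP wN.
apply/negPn/negP => nup.
have := nt uS (NN_S wN) pS (NN_nadj wN) (same_nonadj (NN_S wN) pS (esym fp)) nup.
case=> h.
- by move: (NN_neq wN); rewrite h eqxx.
- by move: pw; rewrite -h eqxx.
- by move: (NN_neq wN); rewrite (su (NN_S wN) (esym (etrans (congr1 f h) fp))) eqxx.
Qed.

Lemma p_notU w : w \in NN u -> partner w \notin U.
Proof.
move=> wN; have [pS pw fp] := pP wN.
rewrite inU pS /=; apply/negP => /singP sp.
by move: pw; rewrite -(sp w (NN_S wN) (esym fp)) eqxx.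
Qed.

Lemma p_inj w1 w2 : w1 \in NN u -> w2 \in NN u -> partner w1 = partner w2 -> w1 = w2.
Proof.
move=> w1N w2N h.
have [p1S p1w f1] := pP w1N; have [p2S p2w f2] := pP w2N.
apply: (cls2 (NN_S w1N) (NN_S w2N) p1S).
- by rewrite f1.
- by rewrite h f2.
- by rewrite eq_sym.
- by rewrite h eq_sym.
Qed.

Lemma fu_neq x : x \in S -> x != u -> f x <> f u.
Proof. by move=> xS xu h; move: xu; rewrite (su xS h) eqxx. Qed.

Lemma singU u2 : u2 \in U -> forall y, y \in S -> f y = f u2 -> y = u2.
Proof. by rewrite inU => /andP [_ /singP]. Qed.

Lemma P3 w u2 : w \in NN u -> u2 \in U -> u2 != u -> e (partner w) u2.
Proof.
move=> wN u2U u2u.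
have [pS pw fp] := pP wN.
have wS := NN_S wN.
have u2S : u2 \in S by move: u2U; rewrite inU => /andP [].
have u2w : u2 != w by apply/eqP => h; move: (NN_notU wN); rewrite -h u2U.
pose g := fun x => if x == w then f u else f x.
have pg : prop g S.
  move=> x y xS yS exy; rewrite /g.
  case: (eqVneq x w) => [xw|xw]; case: (eqVneq y w) => [yw|yw].
  - by move: exy; rewrite xw yw e_irr.
  - move=> h; move: exy; rewrite xw (su yS (esym h)) e_sym.
    by rewrite (negbTE (NN_nadj wN)).
  - move=> h; move: exy; rewrite yw (su xS h).
    by rewrite (negbTE (NN_nadj wN)).
  - exact: fprop.
have gmin : minc S g.
  apply: minc_sub fmin pg _; apply/subsetP => c /imsetP [x xS ->]; rewrite /g.
  case: ifP => _; apply/imsetP; [exists u => //; exact: uS | by exists x].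
have sgp : sing g S (partner w).
  apply/singP => y yS; rewrite /g (negbTE pw).
  case: (eqVneq y w) => [yw|yw].
  - by move=> h; exfalso; apply: (fu_neq wS (NN_neq wN)); rewrite -fp -h.
  - move=> h; apply: (cls2 yS pS wS) => //; by rewrite h.
have sgu2 : sing g S u2.
  apply/singP => y yS; rewrite /g (negbTE u2w).
  case: (eqVneq y w) => [yw|yw].
  - move=> h; exfalso; move: u2u; rewrite (singU u2U uS h) eqxx //.
  - exact: singU.
have pu2 : partner w != u2 by apply/eqP => h; move: (p_notU wN); rewrite h u2U.
exact: (merge gmin pS u2S pu2 sgp sgu2).
Qed.

Lemma P4 w1 w2 u2 : w1 \in NN u -> w2 \in NN u -> w1 != w2 ->
  ~~ e (partner w1) (partner w2) -> u2 \in U -> u2 != u -> e w2 u2.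
Proof.
move=> w1N w2N w12 np u2U u2u.
have [p1S p1w f1] := pP w1N; have [p2S p2w f2] := pP w2N.
have w1S := NN_S w1N; have w2S := NN_S w2N.
have u2S : u2 \in S by move: u2U; rewrite inU => /andP [].
set p1 := partner w1 in p1S p1w f1 np *.
set p2 := partner w2 in p2S p2w f2 np *.
have w1p2 : w1 != p2 by apply/eqP => h; move: (NN_nadj w1N); rewrite h p_adj.
have fw1u : f w1 <> f u := fu_neq w1S (NN_neq w1N).
have cl1 y : y \in S -> f y = f w1 -> y != w1 -> y = p1.
  move=> yS fy yw1; apply: (cls2 yS p1S w1S fy f1 yw1 p1w).
pose g := fun x => if x == w1 then f u else if x == p2 then f w1 else f x.
have pg : prop g S.
  move=> x y xS yS exy; rewrite /g.
  case: (eqVneq x w1) => [xw1|xw1]; case: (eqVneq y w1) => [yw1|yw1].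
  - by move: exy; rewrite xw1 yw1 e_irr.
  - case: (eqVneq y p2) => [yp2|yp2].
      by move=> h; apply: fw1u.
    move=> h; move: exy; rewrite xw1 (su yS (esym h)) e_sym.
    by rewrite (negbTE (NN_nadj w1N)).
  - case: (eqVneq x p2) => [xp2|xp2].
      by move=> h; apply: fw1u.
    move=> h; move: exy; rewrite yw1 (su xS h).
    by rewrite (negbTE (NN_nadj w1N)).
  - case: (eqVneq x p2) => [xp2|xp2]; case: (eqVneq y p2) => [yp2|yp2].
    + by move: exy; rewrite xp2 yp2 e_irr.
    + move=> h; move: exy; rewrite xp2 (cl1 y yS (esym h) yw1) e_sym.
      by rewrite (negbTE np).
    + move=> h; move: exy; rewrite yp2 (cl1 x xS h xw1).
      by rewrite (negbTE np).
    + exact: fprop.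
have gmin : minc S g.
  apply: minc_sub fmin pg _; apply/subsetP => c /imsetP [x xS ->]; rewrite /g.
  case: ifP => _; first by apply/imsetP; exists u => //; exact: uS.
  case: ifP => _; apply/imsetP; [by exists w1 | by exists x].
have w2p2 : w2 != p2 by rewrite eq_sym.
have sgw2 : sing g S w2.
  have w21 : w2 != w1 by rewrite eq_sym.
  apply/singP => y yS; rewrite /g (negbTE w21) (negbTE w2p2).
  case: (eqVneq y w1) => [yw1|yw1].
    by move=> h; exfalso; apply: (fu_neq w2S (NN_neq w2N)); rewrite -h.
  case: (eqVneq y p2) => [yp2|yp2].
    move=> h; exfalso.
    have := cl1 w2 w2S (esym h) w21.
    by move=> h2; move: (NN_nadj w2N); rewrite h2 p_adj.
  move=> h; case: (eqVneq y w2) => // yw2.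
  by move: yp2; rewrite (cls2 yS p2S w2S h f2 yw2 p2w) eqxx.
have u2w1 : u2 != w1 by apply/eqP => h; move: (NN_notU w1N); rewrite -h u2U.
have u2p2 : u2 != p2 by apply/eqP => h; move: (p_notU w2N); rewrite -/p2 -h u2U.
have sgu2 : sing g S u2.
  apply/singP => y yS; rewrite /g (negbTE u2w1) (negbTE u2p2).
  case: (eqVneq y w1) => [yw1|yw1].
    move=> h; exfalso; move: u2u; rewrite (singU u2U uS h) eqxx //.
  case: (eqVneq y p2) => [yp2|yp2].
    move=> h; exfalso; move: u2w1; rewrite (singU u2U w1S h) eqxx //.
  exact: singU.
have w2u2 : w2 != u2 by apply/eqP => h; move: (NN_notU w2N); rewrite h u2U.
exact: (merge gmin w2S u2S w2u2 sgw2 sgu2).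
Qed.

Lemma clique2 (X : {set T}) : X \subset NN u ->
  (forall x y, x \in X -> y \in X -> x != y -> e (partner x) (partner y)) ->
  #|X| + #|U| <= om S.
Proof.
move=> XN hX.
have XN' x : x \in X -> x \in NN u by move=> xX; exact: (subsetP XN).
have cX : #|partner @: X| = #|X|.
  apply: card_in_imset => x y xX yX; exact: (p_inj (XN' x xX) (XN' y yX)).
have dis : partner @: X :&: U = set0.
  apply/setP => z; rewrite !inE; apply/negP => /andP [/imsetP [x xX ->] pU].
  by move: (p_notU (XN' x xX)); rewrite inU pU.
have cK : #|partner @: X :|: U| = #|X| + #|U| by rewrite cardsU dis cards0 cX subn0.
rewrite -cK; apply: om_ge.
  apply/subsetP => z; rewrite inE => /orP [/imsetP [x xX ->]|zU].
  - by have [] := pP (XN' x xX).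
  - by move: zU; rewrite inU => /andP [].
have USu y : y \in U -> y != u -> forall x, x \in X -> e (partner x) y.
  move=> yU yu x xX; exact: (P3 (XN' x xX) yU yu).
have Uu x : x \in X -> e (partner x) u by move=> xX; rewrite e_sym; exact: (p_adj (XN' x xX)).
move=> x y; rewrite !in_setU => /orP [/imsetP [x' x'X ->]|xU] /orP [/imsetP [y' y'X ->]|yU] xy.
- apply: hX => //; apply/eqP => h; move: xy; rewrite h eqxx //.
- case: (eqVneq y u) => [->|yu]; [exact: Uu | exact: USu].
- rewrite e_sym; case: (eqVneq x u) => [->|xu]; [exact: Uu | exact: USu].
- exact: U_clique.
Qed.

Lemma key_u : 2 * #|U| + #|NN u| <= 2 * om S.
Proof.
set N := NN u.
set A := [set w in N | [exists w1 in N, (w1 != w) && ~~ e (partner w1) (partner w)]].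
set B := N :\: A.
have AN : A \subset N by apply/subsetP => w; rewrite inE => /andP [].
have cN : #|N| = #|A| + #|B| by rewrite -(cardsID A N) (setIidPr AN).
have BN : B \subset N by exact: subsetDl.
have inB w : w \in B -> forall w1, w1 \in N -> w1 != w -> e (partner w1) (partner w).
  rewrite inE => /andP [wA wN] w1 w1N w1w; apply/negPn/negP => np.
  move: wA; rewrite inE wN /=; case/negP; apply/existsP; exists w1; by rewrite w1N w1w np.
have hB : forall x y, x \in B -> y \in B -> x != y -> e (partner x) (partner y).
  move=> x y xB yB xy; apply: (inB y yB x (subsetP BN x xB) xy).
have c1 : #|A| + #|U| <= (om S).+1.
  have dis : A :&: (U :\ u) = set0.
    apply/setP => z; rewrite in_setI in_setD1 in_set0; apply/negP => /andP [zA /andP [_ zU]].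
    by move: (NN_notU (subsetP AN z zA)); rewrite zU.
  have cC : #|A :|: (U :\ u)| = #|A| + #|U| - 1.
    by rewrite cardsU dis cards0 subn0 (cardsD1 u U) uU; lia.
  have : #|A :|: (U :\ u)| <= om S.
    apply: om_ge.
      apply/subsetP => z; rewrite !inE => /orP [/andP [zN _]|/andP [_ zU]].
      - by case/and3P: zN.
      - by case/andP: zU.
    have AU x y : x \in A -> y \in U :\ u -> e x y.
      rewrite in_set => /andP [xN /existsP [w1 /and3P [w1N w1x np]]].
      rewrite in_setD1 => /andP [yu yU]; exact: (P4 w1N xN w1x np yU yu).
    move=> x y; rewrite in_setU => /orP [xA|xU]; rewrite in_setU => /orP [yA|yU] xy.
    - exact: (NN_clique uS (subsetP AN x xA) (subsetP AN y yA) xy).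
    - exact: AU.
    - rewrite e_sym; exact: AU.
    - by move: xU yU; rewrite !in_setD1 => /andP [_ xU] /andP [_ yU]; exact: U_clique.
  have : 0 < #|U| by apply/card_gt0P; exists u.
  lia.
case: (set_0Vmem A) => [A0|[a aA]].
  have := clique2 BN hB.
  move: cN; rewrite A0 cards0 => cN; lia.
have aB : a \notin B by rewrite inE aA.
have aN : a \in N := subsetP AN a aA.
have X2 : #|a |: B| + #|U| <= om S.
  apply: clique2.
    by apply/subsetP => z; rewrite in_setU1 => /orP [/eqP ->|zB]; [exact: aN | exact: (subsetP BN)].
  move=> x y; rewrite !in_setU1 => /orP [/eqP ->|xB] /orP [/eqP ->|yB] xy.
  - by move: xy; rewrite eqxx.
  - by apply: (inB y yB a aN); apply/eqP => h; move: aB; rewrite h yB.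
  - by rewrite e_sym; apply: (inB x xB a aN); apply/eqP => h; move: aB; rewrite h xB.
  - exact: hB.
move: X2; rewrite cardsU1 aB /=; lia.
Qed.

End WithU.

Lemma key : S != set0 -> exists2 v, v \in S & 2 * #|U| + #|NN v| <= 2 * om S.
Proof.
move=> /set0Pn [v0 v0S].
case: (set_0Vmem U) => [U0|[u uU]].
  exists v0 => //; rewrite U0 cards0 /=.
  have : #|NN v0| <= om S.
    apply: om_ge; first by apply/subsetP => z; rewrite inNN => /and3P [].
    exact: NN_clique.
  lia.
exists u; [exact: uS | exact: key_u].
Qed.

End Alpha2.

Lemma deg_split (S : {set T}) v : v \in S -> #|S| = 1 + #|[set y in S | e v y]| + #|NN S v|.
Proof.
move=> vS.
rewrite -(cardsID [set y | e v y] S).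
have -> : S :&: [set y | e v y] = [set y in S | e v y] by apply/setP => y; rewrite !inE.
rewrite (cardsD1 v (S :\: [set y | e v y])).
have -> : v \in S :\: [set y | e v y] by rewrite !inE e_irr vS.
have -> : (S :\: [set y | e v y]) :\ v = NN S v.
  by apply/setP => y; rewrite !inE; case: (y \in S); case: (y == v); case: (e v y).
lia.
Qed.

Lemma alpha2 (S : {set T}) : notriple S -> 4 * chi' S <= #|S| + 2 * om S + De S + 1.
Proof.
move=> nt.
case: (eqVneq S set0) => [->|Sne]; first by rewrite /chi' eqxx.
have [f fmin] := exists_minc S.
have [v vS hv] := key nt fmin Sne.
have c1 : 2 * #|f @: S| <= #|S| + #|U S f| := count_classes f S.
have c2 : chi' S <= #|f @: S| := chi_img (fprop fmin).
have c3 := De_ge vS.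
have c4 := deg_split vS.
lia.
Qed.

Definition IH_at (m : nat) := forall S' H' : {set T}, #|S'| < m -> H' \subset S' ->
  4 * chi' S' <= #|S' :\: H'| + 3 * chi' H' + 2 * om S' + De S' + 1.

Lemma step (S H C : {set T}) : IH_at #|S| -> S != set0 -> H \subset S -> C \subset S ->
  (forall x y, x \in C -> y \in C -> ~~ e x y) ->
  chi' (H :\: C) < chi' H \/ 3 <= #|C :\: H| ->
  4 * chi' S <= #|S :\: H| + 3 * chi' H + 2 * om S + De S + 1.
Proof.
move=> IH Sne HS CS Cind hyp.
pose P (I : {set T}) := [&& C \subset I, I \subset S & [forall x in I, forall y in I, ~~ e x y]].
have P0 : P C.
  rewrite /P subxx CS /=; apply/forallP => x; apply/implyP => xC; apply/forallP => y; apply/implyP => yC.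
  exact: Cind.
case: (arg_maxnP (fun I : {set T} => #|I|) P0) => I /and3P [CI IS /forallP Iind] Imax.
have Iind' x y : x \in I -> y \in I -> ~~ e x y.
  by move=> xI yI; move: (Iind x); rewrite xI /= => /forallP /(_ y); rewrite yI.
have Imaxl v : v \in S -> v \notin I -> exists2 y, y \in I & e v y.
  move=> vS vI; case: (boolP [exists y in I, e v y]) => [/existsP [y /andP [yI evy]]|/existsPn h].
    by exists y.
  exfalso.
  have PvI : P (v |: I).
    rewrite /P; apply/and3P; split.
    - exact: (subset_trans CI (subsetUr _ _)).
    - by apply/subsetP => z; rewrite in_setU1 => /orP [/eqP ->|/(subsetP IS)].
    - apply/forallP => x; apply/implyP; rewrite in_setU1 => xI; apply/forallP => y; apply/implyP; rewrite in_setU1 => yI.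
      case/orP: xI => [/eqP ->|xI]; case/orP: yI => [/eqP ->|yI].
      + by rewrite e_irr.
      + by move: (h y); rewrite yI.
      + by move: (h x); rewrite xI /= e_sym.
      + exact: Iind'.
  have := Imax _ PvI; rewrite cardsU1 vI /=; lia.
set S' := S :\: I; set H' := H :\: I.
have Ine : I != set0.
  case/set0Pn: Sne => x xS; apply/set0Pn.
  case: (boolP (x \in I)) => [xI|xI]; first by exists x.
  by have [y yI _] := Imaxl x xS xI; exists y.
have cS' : #|S'| < #|S|.
  rewrite /S' cardsD (setIidPr IS).
  have : 0 < #|I| by rewrite card_gt0.
  have : #|I| <= #|S| by exact: subset_leq_card.
  have : 0 < #|S| by rewrite card_gt0.
  lia.
have IH' := IH S' H' cS' (setSD I HS).
have F1 : chi' S <= (chi' S').+1.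
  have [g [pg bg]] := chiP S'.
  apply: (chi_le (f := fun x => if x \in I then chi' S' else g x)).
  - move=> x y xS yS exy; case: (boolP (x \in I)) => xI; case: (boolP (y \in I)) => yI.
    + by move: exy; rewrite (negbTE (Iind' x y xI yI)).
    + move=> h; have := bg y; rewrite !inE yI yS /= => /(_ isT); rewrite -h ltnn //.
    + move=> h; have := bg x; rewrite !inE xI xS /= => /(_ isT); rewrite h ltnn //.
    + apply: pg => //; rewrite !inE ?xI ?yI ?xS ?yS //.
  - move=> x xS; case: (boolP (x \in I)) => xI //.
    by apply: ltnW; apply: bg; rewrite !inE xI xS.
have F2 : chi' H' <= chi' (H :\: C).
  apply: chi_sub; apply/subsetP => x; rewrite !inE => /andP [xI ->]; rewrite andbT.
  by apply/negP => xC; move: xI; rewrite (subsetP CI x xC).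
have F2b : chi' (H :\: C) <= chi' H by apply: chi_sub; exact: subsetDl.
have F3 : #|S' :\: H'| + #|C :\: H| <= #|S :\: H|.
  rewrite -(cardsID I (S :\: H)).
  have -> : S' :\: H' = (S :\: H) :\: I.
    by apply/setP => x; rewrite !inE; case: (x \in I); case: (x \in H).
  rewrite addnC leq_add2r; apply: subset_leq_card; apply/subsetP => x.
  rewrite !inE => /andP [xH xC]; rewrite xH (subsetP CI x xC) (subsetP CS x xC) //.
have F4 : om S' <= om S by apply: om_sub; exact: subsetDl.
case: (eqVneq S' set0) => [S0|S'ne].
  have : chi' S' = 0 by rewrite /chi' S0 eqxx.
  case: hyp; lia.
have F5 : (De S').+1 <= De S.
  have hx x : x \in S' -> #|[set y in S' | e x y]| < De S.
    move=> xS'.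
    have xS : x \in S by move: xS'; rewrite inE => /andP [].
    have xI : x \notin I by move: xS'; rewrite inE => /andP [].
    have [y yI exy] := Imaxl x xS xI.
    apply: leq_trans (De_ge xS); apply: proper_card; apply/properP; split.
      by apply/subsetP => z; rewrite !inE => /andP [/andP [_ ->] ->].
    exists y; first by rewrite inE (subsetP IS y yI) exy.
    by rewrite !inE yI.
  case/set0Pn: S'ne => x0 x0S.
  have := hx x0 x0S.
  have : De S' <= (De S).-1.
    apply/bigmax_leqP => x xS'; have := hx x xS'; lia.
  lia.
case: hyp; lia.
Qed.

Lemma IH_mono m k : IH_at m -> k <= m -> IH_at k.
Proof. move=> h km S' H' hS; apply: h; exact: leq_trans hS km. Qed.

Lemma allIH m : IH_at m.
Proof.
elim: m => [|m IHm] S H hS HS; first by [].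
have IH : IH_at #|S| by apply: IH_mono IHm _; rewrite -ltnS.
case: (eqVneq S set0) => [S0|Sne].
  by rewrite /chi' S0 eqxx.
case: (eqVneq H set0) => [H0|Hne].
  case: (boolP [exists x in S, exists y in S, exists z in S,
     [&& x != y, y != z, x != z, ~~ e x y, ~~ e y z & ~~ e x z]]).
  - move/existsP => [x /andP [xS /existsP [y /andP [yS /existsP [z /andP [zS /and4P [xy yz xz /and3P [nxy nyz nxz]]]]]]]].
    apply: (step (C := [set x; y; z])) => //.
    + by apply/subsetP => w; rewrite !inE => /orP [/orP [] | ] /eqP ->.
    + move=> a b; rewrite !inE => /orP [/orP [] | ] /eqP -> /orP [/orP [] | ] /eqP ->;
        rewrite ?e_irr // 1?e_sym //.
    + right; rewrite H0 setD0.
      have -> : [set x; y; z] = x |: [set y; z] by apply/setP => w; rewrite !inE orbA.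
      by rewrite cardsU1 cards2 yz !inE negb_or xy xz.
  - move/existsPn => hn.
    have nt : notriple S.
      move=> x y z xS yS zS nxy nyz nxz.
      case: (eqVneq x y) => [->|xy]; first by constructor 1.
      case: (eqVneq y z) => [->|yz]; first by constructor 2.
      case: (eqVneq x z) => [->|xz]; first by constructor 3.
      exfalso; move: (hn x); rewrite xS /= => /existsPn /(_ y); rewrite yS /= => /existsPn /(_ z).
      by rewrite zS xy yz xz nxy nyz nxz.
    have := alpha2 nt; rewrite H0 setD0 /chi' eqxx; lia.
have [g [pg bg]] := chiP H.
set k := chi' H in bg *.
have k1 : 0 < k by case/set0Pn: Hne => x0 x0H; have := bg x0 x0H; lia.
pose C := [set x in H | g x == k.-1].
apply: (step (C := C)) => //.
- apply/subsetP => x; rewrite inE => /andP [xH _]; exact: (subsetP HS).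
- move=> x y; rewrite !inE => /andP [xH /eqP gx] /andP [yH /eqP gy]; apply/negP => exy.
  by apply: (pg x y xH yH exy); rewrite gx gy.
- left; suff : chi' (H :\: C) <= k.-1 by lia.
  apply: (chi_le (f := g)).
  + move=> x y; rewrite !inE => /andP [_ xH] /andP [_ yH]; exact: pg.
  + move=> x; rewrite !inE => /andP [gx xH]; have := bg x xH.
    move: gx; rewrite /= => /eqP; lia.
Qed.

Lemma om_setT : om setT = omega e.
Proof. by rewrite /om /omega; apply: eq_bigl => C; rewrite subsetT. Qed.

Lemma De_setT : De setT = Delta e.
Proof.
rewrite /De /Delta; apply: eq_big => [x|x _]; first by rewrite inE.
by apply: eq_card => y; rewrite !inE.
Qed.

Lemma delta_ge : #|T| <= delta_compl e + Delta e + 1.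
Proof.
rewrite /delta_compl.
elim/big_ind: _ => //.
- by rewrite -addnA leq_addr.
- move=> a b ha hb; lia.
- move=> x _.
  have := deg_split (in_setT x).
  have := De_ge (in_setT x); rewrite De_setT.
  have -> : #|[set: T]| = #|T| by rewrite cardsT.
  have -> : NN [set: T] x = [set y | (y != x) && ~~ e x y] by apply/setP => y; rewrite !inE.
  lia.
Qed.

Lemma chi_on_le (S : {set T}) : chi_on e S <= #|T|.
Proof.
rewrite /chi_on; elim/big_ind: _ => //.
- move=> a b ha hb; rewrite geq_min ha //.
- move=> i _; rewrite -ltnS; exact: ltn_ord.
Qed.

Lemma main_nat (H : {set T}) : H != set0 -> 
  4 * chi e + #|H| <= 2 * omega e + 2 * Delta e + 2 + delta_compl e + 3 * chi_on e H.
Proof.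
move=> Hne.
have := allIH (m := #|T|.+1) (S' := setT) (H' := H) (max_card _) (subsetT H).
have Tne : [set: T] != set0 by apply/set0Pn; case/set0Pn: Hne => x _; exists x; rewrite inE.
rewrite /chi' (negbTE Tne) (negbTE Hne) om_setT De_setT.
have := delta_ge.
have : #|[set: T] :\: H| + #|H| = #|T| by rewrite -cardsT -(cardsID H setT) (setIidPr (subsetT H)) addnC.
rewrite /chi; lia.
Qed.

End Main.

Import Order.TTheory GRing.Theory Num.Theory.
Local Open Scope ring_scope.

Theorem corollary12 (T : finType) (e : rel T)
  (e_sym : symmetric e) (e_irr : irreflexive e) (T_ne : (0 < #|T|)%N) :
  ((chi e)%:Q <=
     (1 / 2) * ((omega e)%:Q + (Delta e)%:Q + 1)
     + ((delta_compl e)%:Q - (eta e)%:~R) / 4).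
Proof.
have Tne : [set: T] != set0 by apply/set0Pn; case/card_gt0P: T_ne => x _; exists x; rewrite inE.
have hT := main_nat e_sym e_irr Tne.
have cT : chi_on e [set: T] = chi e by [].
have cle : (chi e <= #|T|)%N := chi_on_le e [set: T].
have cardT : #|[set: T]| = #|T| by rewrite cardsT.
have Hint : eta e <= 2 * (omega e)%:Z + 2 * (Delta e)%:Z + 2 + (delta_compl e)%:Z - 4 * (chi e)%:Z.
  rewrite /eta; elim/big_ind: _.
  - rewrite cT cardT in hT; lia.
  - by move=> x y hx hy; rewrite ge_max hx hy.
  - move=> S0 S0ne; have := main_nat e_sym e_irr S0ne; lia.
have := Hint; rewrite -(ler_int rat) => Hq.
rewrite !rmorphB !rmorphD !rmorphM /= in Hq.
lra.

Qed.
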